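(* Let $n\ge1$ be an integer, let $S_n$ be the sum of $n$ independent random variables each uniformly distributed on $[0,1]$, and let $p\ge 1$ be a real number. Then for every integer $k$, $$\Pr\Big(S_n\in \tfrac1p+[k-1,k]\Big)=\frac{1}{p^n\,n!}\,A^{(p)}(n,k).$$
   Context: For real $p\ge1$, integer $n\ge0$ and $0\le j\le n+1$, $A^{(p)}(n,j)=\sum_{r=0}^{j}(-1)^r\binom{n+1}{r}[p(j-r)+1]^{n}$; by convention $A^{(p)}(n,j)=0$ for $j<0$ and for $j>n+1$. Here $\tfrac1p+[k-1,k]$ denotes the interval $[\tfrac1p+k-1,\tfrac1p+k]$. *)

(* Defs.v *)
From Stdlib Require Import Reals Lra Lia ZArith List ClassicalEpsilon.
Open Scope R_scope.

(* Riemann integral of f over [a,b]; if f is not Riemann integrable the value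
   is an unspecified real (chosen by epsilon). *)
Definition RInt (f : R -> R) (a b : R) : R :=
  epsilon (inhabits 0%R)
    (fun v => exists pr : Riemann_integrable f a b, RiemannInt pr = v).

Fixpoint cube_int (n : nat) (F : list R -> R) : R :=
  match n with
  | O => F nil
  | S m => RInt (fun t => cube_int m (fun xs => F (t :: xs))) 0 1
  end.

Definition sumR (xs : list R) : R := fold_right Rplus 0 xs.

Definition ind_Icc (a b x : R) : R :=
  if Rle_dec a x then (if Rle_dec x b then 1 else 0) else 0.

(* P(S_n in [a,b]) where S_n = U_1 + ... + U_n, U_i i.i.d. uniform on [0,1]:
   the joint law is Lebesgue measure on [0,1]^n, so this is the integral of
   the indicator of {x in [0,1]^n : a <= x_1+...+x_n <= b}. *)
Definition prob_Sn_in (n : nat) (a b : R) : R :=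
  cube_int n (fun xs => ind_Icc a b (sumR xs)).

Definition Ap (p : R) (n : nat) (j : Z) : R :=
  if ((0 <=? j)%Z && (j <=? Z.of_nat n + 1)%Z)%bool then
    let jn := Z.to_nat j in
    sum_f_R0 (fun r => (-1) ^ r * C (S n) r * (p * INR (jn - r) + 1) ^ n) jn
  else 0.

(* Main.v *)
Require Import Defs.
From Stdlib Require Import Reals ZArith Lra Lia ClassicalEpsilon FunctionalExtensionality.
From Coquelicot Require Import Coquelicot.
Open Scope R_scope.

Lemma RInt_of_is (f : R -> R) a b v : is_RInt f a b v -> Defs.RInt f a b = v.
Proof.
  intro H.
  assert (ex : ex_RInt f a b) by (exists v; exact H).
  pose (pr := ex_RInt_Reals_0 f a b ex).
  unfold Defs.RInt.
  destruct (epsilon_spec (inhabits 0) (fun v => exists pr : Riemann_integrable f a b, RiemannInt pr = v)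
     (ex_intro _ (RiemannInt pr) (ex_intro _ pr eq_refl))) as [pr' Hpr'].
  rewrite <- Hpr', <- RInt_Reals. apply is_RInt_unique; exact H.
Qed.

Lemma is_RInt_val (f : R -> R) a b l l' : is_RInt f a b l -> @eq R l l' -> is_RInt f a b l'.
Proof. intros H ->; exact H. Qed.

Definition pp (m : nat) (x : R) : R := if Rle_dec 0 x then x ^ m else 0.

Lemma poly_int m y u w : is_RInt (fun t => (y - t) ^ m) u w
   (((y - u) ^ (S m) - (y - w) ^ (S m)) / INR (S m)).
Proof.
  assert (HS : INR (S m) <> 0) by (apply not_0_INR; lia).
  eapply is_RInt_val.
  - apply (is_RInt_derive (fun t => - (y - t) ^ (S m) / INR (S m))).
    + intros x _. auto_derive; auto.
      change (match m with 0%nat => 1 | S _ => INR m + 1 end) with (INR (S m)). replace (y + - x) with (y - x) by ring. set (z := (y - x) ^ m). field. exact HS.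
    + intros x _. apply (ex_derive_continuous (fun t => (y - t) ^ m)). auto_derive. auto.
  - unfold minus, plus, opp; simpl. set (z1 := (y - u) ^ m). set (z2 := (y - w) ^ m). field. exact HS.
Qed.

Ltac toR := lazymatch goal with |- @eq _ ?a ?b => change (@eq R a b) end.

Lemma scalR (a b : R) : scal a b = a * b. Proof. reflexivity. Qed.
Lemma plusR (a b : R) : plus a b = a + b. Proof. reflexivity. Qed.
Lemma minusR (a b : R) : minus a b = a - b. Proof. reflexivity. Qed.

Lemma RInt0 a b : is_RInt (fun _ : R => 0) a b 0.
Proof. eapply is_RInt_val. apply is_RInt_const. unfold scal; simpl; unfold mult; simpl. ring. Qed.

Lemma Rmin01 : Rmin 0 1 = 0. Proof. apply Rmin_left; lra. Qed.
Lemma Rmax01 : Rmax 0 1 = 1. Proof. apply Rmax_right; lra. Qed.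

Lemma pp_nonpos m x : x <= 0 -> pp (S m) x = 0.
Proof. intro H. unfold pp. destruct (Rle_dec 0 x); [|reflexivity].
  replace x with 0 by lra. simpl. ring. Qed.

Lemma pp_nonneg m x : 0 <= x -> pp m x = x ^ m.
Proof. intro H. unfold pp. destruct (Rle_dec 0 x); [reflexivity|lra]. Qed.

Lemma pp_neg m x : x < 0 -> pp m x = 0.
Proof. intro H. unfold pp. destruct (Rle_dec 0 x); [lra|reflexivity]. Qed.

Lemma L1 m y : is_RInt (fun t => pp m (y - t)) 0 1
  ((pp (S m) y - pp (S m) (y - 1)) / INR (S m)).
Proof.
  destruct (Rle_dec y 0) as [Hy|Hy].
  - rewrite !pp_nonpos by lra.
    eapply is_RInt_val.
    + apply (is_RInt_ext (fun _ => 0)). 2: apply RInt0.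
      intros x Hx. rewrite Rmin01, Rmax01 in Hx. rewrite pp_neg; lra.
    + field. apply not_0_INR; lia.
  - destruct (Rle_dec 1 y) as [Hy1|Hy1].
    + rewrite !pp_nonneg by lra.
      eapply is_RInt_val.
      * apply (is_RInt_ext (fun t => (y - t) ^ m)). 2: apply poly_int.
        intros x Hx. rewrite Rmin01, Rmax01 in Hx. rewrite pp_nonneg; lra.
      * replace (y - 0) with y by ring. reflexivity.
    + rewrite (pp_nonpos m (y - 1)) by lra. rewrite pp_nonneg by lra.
      eapply is_RInt_val.
      * apply (is_RInt_Chasles _ 0 y 1).
        -- apply (is_RInt_ext (fun t => (y - t) ^ m)). 2: apply poly_int.
           intros x Hx. rewrite Rmin_left in Hx by lra. rewrite Rmax_right in Hx by lra.
           rewrite pp_nonneg; lra.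
        -- apply (is_RInt_ext (fun _ => 0)). 2: apply RInt0.
           intros x Hx. rewrite Rmin_left in Hx by lra. rewrite Rmax_right in Hx by lra.
           rewrite pp_neg; lra.
      * rewrite plusR.
        replace (y - y) with 0 by ring. replace (y - 0) with y by ring.
        rewrite pow_i by lia. field. apply not_0_INR; lia.
Qed.

Lemma pt_mod (f g : R -> R) s (l : R) : (forall t, 0 < t < 1 -> t <> s -> f t = g t) ->
  is_RInt g 0 1 l -> is_RInt f 0 1 l.
Proof.
  intros Hfg H.
  destruct (Rlt_dec 0 s) as [H0|H0]; [destruct (Rlt_dec s 1) as [H1|H1]|].
  - assert (E : ex_RInt g 0 1) by (exists l; exact H).
    assert (E1 : @ex_RInt R_CompleteNormedModule g 0 s) by (apply (ex_RInt_Chasles_1 _ 0 s 1); [lra|exact E]).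
    assert (E2 : @ex_RInt R_CompleteNormedModule g s 1) by (apply (ex_RInt_Chasles_2 _ 0 s 1); [lra|exact E]).
    assert (I1 : is_RInt g 0 s (RInt g 0 s)) by exact (RInt_correct _ _ _ E1).
    assert (I2 : is_RInt g s 1 (RInt g s 1)) by exact (RInt_correct _ _ _ E2).
    eapply is_RInt_val.
    + apply (is_RInt_Chasles _ 0 s 1).
      * apply (is_RInt_ext g). 2: exact I1.
        intros x Hx. rewrite Rmin_left in Hx by lra. rewrite Rmax_right in Hx by lra.
        symmetry; apply Hfg; lra.
      * apply (is_RInt_ext g). 2: exact I2.
        intros x Hx. rewrite Rmin_left in Hx by lra. rewrite Rmax_right in Hx by lra.
        symmetry; apply Hfg; lra.
    + pose proof (RInt_Chasles g 0 s 1 E1 E2) as HC.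
      pose proof (is_RInt_unique g 0 1 l H) as HU.
      rewrite <- HU, <- HC. reflexivity.
  - apply (is_RInt_ext g). 2: exact H. intros x Hx. rewrite Rmin01, Rmax01 in Hx.
    symmetry; apply Hfg; lra.
  - apply (is_RInt_ext g). 2: exact H. intros x Hx. rewrite Rmin01, Rmax01 in Hx.
    symmetry; apply Hfg; lra.
Qed.

Fixpoint idf (k : nat) (g : R -> R) : R -> R :=
  match k with
  | O => g
  | S k => idf k (fun y => g y - g (y - 1))
  end.

Lemma L2 k : forall (g G : R -> R), (forall y, is_RInt (fun t => g (y - t)) 0 1 (G y)) ->
  forall y, is_RInt (fun t => idf k g (y - t)) 0 1 (idf k G y).
Proof.
  induction k as [|k IH]; intros g G H y.
  - exact (H y).
  - simpl. apply (IH (fun y => g y - g (y - 1)) (fun y => G y - G (y - 1))).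
    intros z.
    pose proof (is_RInt_minus _ _ 0 1 _ _ (H z) (H (z - 1))) as HM.
    eapply is_RInt_val.
    + apply (is_RInt_ext _ _ _ _ _ (fun x _ => eq_refl)) in HM.
      apply (is_RInt_ext (fun t => g (z - t) - g (z - 1 - t))). 2: exact HM.
      intros x _. replace (z - x - 1) with (z - 1 - x) by ring. reflexivity.
    + reflexivity.
Qed.

Definition Fm (m : nat) (y : R) : R := pp m y / INR (fact m).

Lemma L1F m y : is_RInt (fun t => Fm m (y - t)) 0 1 (Fm (S m) y - Fm (S m) (y - 1)).
Proof.
  pose proof (is_RInt_scal _ 0 1 (/ INR (fact m)) _ (L1 m y)) as H.
  eapply is_RInt_val.
  - apply (is_RInt_ext _ _ _ _ _ (fun x _ => eq_refl)) in H.
    apply (is_RInt_ext (fun t => / INR (fact m) * pp m (y - t))). 2: exact H.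
    intros x _. toR. unfold Fm. field. apply INR_fact_neq_0.
  - rewrite scalR. unfold Fm. rewrite fact_simpl, mult_INR.
    field. split; [apply INR_fact_neq_0|apply not_0_INR; lia].
Qed.

Lemma cube_shift m (F : R -> R) c :
  (fun t => cube_int m (fun xs => F (c + sumR (t :: xs)))) =
  (fun t => cube_int m (fun xs => F ((c + t) + sumR xs))).
Proof.
  apply functional_extensionality; intro t; f_equal;
  apply functional_extensionality; intro xs. unfold sumR; simpl. f_equal; ring.
Qed.

Lemma cube_S m F : cube_int (S m) F = Defs.RInt (fun t => cube_int m (fun xs => F (cons t xs))) 0 1.
Proof. reflexivity. Qed.

Lemma main_formula a b m : a <= b -> forall c, (1 <= m)%nat ->
  cube_int m (fun xs => ind_Icc a b (c + sumR xs))
  = idf m (Fm m) (b - c) - idf m (Fm m) (a - c).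
Proof.
  intro Hab. induction m as [|m IH]; intros c Hm; [lia|].
  destruct m as [|m].
  - cbn [cube_int]. apply RInt_of_is.
    apply (pt_mod _ (fun t => pp 0 (b - c - t) - pp 0 (a - c - t)) (a - c)).
    + intros t Ht Hne. unfold sumR; simpl. unfold ind_Icc, pp.
      destruct (Rle_dec a (c + (t + 0))); destruct (Rle_dec (c + (t + 0)) b);
      destruct (Rle_dec 0 (b - c - t)); destruct (Rle_dec 0 (a - c - t)); simpl; lra.
    + eapply is_RInt_val.
      * pose proof (is_RInt_minus _ _ 0 1 _ _ (L1 0 (b - c)) (L1 0 (a - c))) as HM.
        apply (is_RInt_ext _ _ _ _ _ (fun x _ => eq_refl)) in HM. exact HM.
      * rewrite minusR. cbn [idf]. unfold Fm. change (fact 1) with 1%nat.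
        change (INR 1) with 1. change (INR (S 0)) with 1. field.
  - rewrite cube_S. rewrite (cube_shift (S m) (ind_Icc a b) c).
    assert (E : (fun t => cube_int (S m) (fun xs => ind_Icc a b ((c + t) + sumR xs))) =
       (fun t => idf (S m) (Fm (S m)) (b - c - t) - idf (S m) (Fm (S m)) (a - c - t))).
    { apply functional_extensionality; intro t. rewrite IH by lia.
      replace (b - (c + t)) with (b - c - t) by ring.
      replace (a - (c + t)) with (a - c - t) by ring. reflexivity. }
    rewrite E. apply RInt_of_is.
    pose proof (L2 (S m) (Fm (S m)) _ (L1F (S m)) (b - c)) as H1.
    pose proof (L2 (S m) (Fm (S m)) _ (L1F (S m)) (a - c)) as H2.
    pose proof (is_RInt_minus _ _ 0 1 _ _ H1 H2) as HM.
    apply (is_RInt_ext _ _ _ _ _ (fun x _ => eq_refl)) in HM. exact HM.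
Qed.

Lemma zero_cube a b m : forall c, c + INR m < a ->
  cube_int m (fun xs => ind_Icc a b (c + sumR xs)) = 0.
Proof.
  induction m as [|m IH]; intros c Hc.
  - simpl. unfold ind_Icc. simpl in Hc. destruct (Rle_dec a (c + 0)); [lra|reflexivity].
  - rewrite cube_S, (cube_shift m (ind_Icc a b) c). apply RInt_of_is.
    apply (is_RInt_ext (fun _ => 0)); [|apply RInt0].
    intros x Hx. rewrite Rmin01, Rmax01 in Hx. toR. rewrite IH; [reflexivity|].
    rewrite S_INR in Hc. lra.
Qed.

Lemma idf_comm k : forall g x, idf k (fun y => g y - g (y - 1)) x = idf k g x - idf k g (x - 1).
Proof.
  induction k as [|k IH]; intros g x.
  - reflexivity.
  - simpl. apply (IH (fun y => g y - g (y - 1))).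
Qed.

Lemma C_n0 n : Binomial.C n 0 = 1.
Proof. unfold Binomial.C. rewrite Nat.sub_0_r. simpl. field. apply INR_fact_neq_0. Qed.

Lemma C_nn n : Binomial.C n n = 1.
Proof. unfold Binomial.C. rewrite Nat.sub_diag. simpl. field. apply INR_fact_neq_0. Qed.

Lemma idf_expand k : forall g x,
  idf k g x = sum_f_R0 (fun r => (-1) ^ r * Binomial.C k r * g (x - INR r)) k.
Proof.
  induction k as [|k IH]; intros g x.
  - simpl. rewrite C_n0. replace (x - 0) with x by ring. ring.
  - cbn [idf]. rewrite IH.
    rewrite (decomp_sum _ (S k)) by lia. simpl pred.
    rewrite C_n0. simpl pow.
    replace (x - INR 0) with x by (simpl; ring).
    destruct k as [|k].
    + simpl. rewrite C_n0, C_nn. replace (x - 0) with x by ring. ring.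
    + replace (sum_f_R0 (fun r => (-1) ^ r * Binomial.C (S k) r * (g (x - INR r) - g (x - INR r - 1))) (S k))
        with (sum_f_R0 (fun r => (-1) ^ r * Binomial.C (S k) r * g (x - INR r)) (S k)
             - sum_f_R0 (fun r => (-1) ^ r * Binomial.C (S k) r * g (x - INR r - 1)) (S k))
        by (rewrite <- minus_sum; apply sum_eq; intros; ring).
      rewrite (decomp_sum (fun r => (-1) ^ r * Binomial.C (S k) r * g (x - INR r))) by lia.
      rewrite (tech5 (fun r => (-1) ^ r * Binomial.C (S k) r * g (x - INR r - 1))).
      rewrite (tech5 (fun i => -1 * (-1) ^ i * Binomial.C (S (S k)) (S i) * g (x - INR (S i)))).
      simpl pred.
      rewrite C_n0, !C_nn.
      replace (x - INR 0) with x by (simpl; ring).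
      assert (Hs : sum_f_R0 (fun i => -1 * (-1) ^ i * Binomial.C (S (S k)) (S i) * g (x - INR (S i))) k
        = sum_f_R0 (fun i => (-1) ^ S i * Binomial.C (S k) (S i) * g (x - INR (S i))) k
          - sum_f_R0 (fun r => (-1) ^ r * Binomial.C (S k) r * g (x - INR r - 1)) k).
      { rewrite <- minus_sum. apply sum_eq. intros i Hi.
        rewrite <- pascal by lia. rewrite S_INR. replace (x - (INR i + 1)) with (x - INR i - 1) by ring.
        simpl pow. ring. }
      rewrite Hs. rewrite !S_INR. simpl pow.
      replace (x - (INR k + 1 + 1)) with (x - (INR k + 1) - 1) by ring. ring.
Qed.

Lemma trunc_sum f M N : (M <= N)%nat -> (forall r, (M < r <= N)%nat -> f r = 0) ->
  sum_f_R0 f N = sum_f_R0 f M.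
Proof.
  intros HMN H. induction N as [|N IH].
  - replace M with 0%nat by lia. reflexivity.
  - destruct (Nat.eq_dec M (S N)) as [->|Hne]; [reflexivity|].
    rewrite tech5, IH by (try lia; intros; apply H; lia). rewrite (H (S N)) by lia. ring.
Qed.

Lemma idf_S n g x : idf n g x - idf n g (x - 1) = idf (S n) g x.
Proof. symmetry. cbn [idf]. apply idf_comm. Qed.

Theorem corollary1 (n : nat) (p : R) (k : Z) :
  (1 <= n)%nat -> 1 <= p ->
  prob_Sn_in n (1 / p + IZR k - 1) (1 / p + IZR k)
  = / (p ^ n * INR (fact n)) * Ap p n k.
Proof.
  intros Hn Hp.
  assert (Hp0 : 0 < 1 / p <= 1).
  { split. apply Rdiv_lt_0_compat; lra. unfold Rdiv. rewrite Rmult_1_l.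
    rewrite <- Rinv_1. apply Rinv_le_contravar; lra. }
  unfold prob_Sn_in.
  set (x := 1 / p + IZR k).
  assert (E : (fun xs => ind_Icc (x - 1) x (sumR xs)) = (fun xs => ind_Icc (x - 1) x (0 + sumR xs))).
  { apply functional_extensionality; intro xs. rewrite Rplus_0_l. reflexivity. }
  rewrite E. clear E.
  destruct (Z_lt_le_dec (Z.of_nat n + 1) k) as [Hbig|Hle].
  - rewrite zero_cube.
    + unfold Ap. replace ((k <=? Z.of_nat n + 1)%Z) with false
        by (symmetry; apply Z.leb_gt; lia). destruct (0 <=? k)%Z; simpl; ring.
    + assert (IZR (Z.of_nat n) + 2 <= IZR k).
      { rewrite <- plus_IZR. apply IZR_le. lia. }
      rewrite INR_IZR_INZ. unfold x. lra.
  - rewrite main_formula by (lra || lia).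
    replace (x - 1 - 0) with (x - 0 - 1) by ring.
    rewrite idf_S, idf_expand.
    replace (x - 0) with x by ring.
    destruct n as [|n]; [lia|].
    destruct (Z_lt_le_dec k 0) as [Hneg|Hpos].
    + unfold Ap. replace ((0 <=? k)%Z) with false by (symmetry; apply Z.leb_gt; lia).
      simpl andb. rewrite Rmult_0_r.
      rewrite (sum_eq _ (fun _ => 0)).
      * rewrite sum_cte. ring.
      * intros r Hr. unfold Fm. rewrite pp_nonpos. unfold Rdiv; ring.
        assert (IZR k <= -1) by (apply (IZR_le k (-1)); lia).
        pose proof (pos_INR r). unfold x. lra.
    + pose (jn := Z.to_nat k).
      assert (Hk : IZR k = INR jn) by (unfold jn; rewrite INR_IZR_INZ, Z2Nat.id by lia; reflexivity).
      assert (Hjn : (jn <= S (S n))%nat) by (unfold jn; lia).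
      unfold Ap. replace ((0 <=? k)%Z && (k <=? Z.of_nat (S n) + 1)%Z)%bool with true
        by (symmetry; apply andb_true_intro; split; apply Z.leb_le; lia).
      cbv zeta. fold jn.
      rewrite (trunc_sum _ jn (S (S n))) by (exact Hjn ||
        (intros r Hr; unfold Fm; rewrite pp_nonpos; [unfold Rdiv; ring|];
         unfold x; rewrite Hk; assert (INR (S jn) <= INR r) by (apply le_INR; lia);
         rewrite S_INR in *; lra)).
      rewrite scal_sum. apply sum_eq. intros r Hr.
      unfold Fm. unfold x. rewrite Hk. rewrite pp_nonneg.
      2: { assert (INR r <= INR jn) by (apply le_INR; lia). lra. }
      rewrite minus_INR by lia.
      replace (1 / p + INR jn - INR r) with ((p * (INR jn - INR r) + 1) * / p) by (field; lra).
      rewrite Rpow_mult_distr, pow_inv.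
      field. split; [apply INR_fact_neq_0|apply pow_nonzero; lra].
Qed.
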